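(* An algebra $\mathbf{A}$ has a minority term if and only if it has a Maltsev term and a minority-majority term.
   Context: A ternary term $m(x,y,z)$ of an algebra $\mathbf{A}$ is a minority term if its interpretation on $A$ satisfies the identities $m(y,x,x)\approx m(x,y,x)\approx m(x,x,y)\approx y$. A ternary term $p(x,y,z)$ of $\mathbf{A}$ is a Maltsev term if $p(x,x,y)\approx p(y,x,x)\approx y$ holds in $\mathbf{A}$. A 6-ary term $t(x_1,\dots,x_6)$ of $\mathbf{A}$ is a minority-majority term if $\mathbf{A}$ satisfies $t(y,x,x,z,y,y)\approx y$, $t(x,y,x,y,z,y)\approx y$, and $t(x,x,y,y,y,z)\approx y$. *)

(* Defs.v *)
(* Universal algebra: an algebra is given by a carrier type A,
   a type F of operation symbols with arity ar : F -> nat, and interpretations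
   op f : ('I_(ar f) -> A) -> A. *)
From mathcomp Require Import all_boot.
Set Implicit Arguments. Unset Strict Implicit. Unset Printing Implicit Defensive.

Inductive term (F : Type) (ar : F -> nat) (n : nat) : Type :=
  | Var of 'I_n
  | App (f : F) of ('I_(ar f) -> term ar n).

Fixpoint eval (A F : Type) (ar : F -> nat) (op : forall f : F, ('I_(ar f) -> A) -> A)
  (n : nat) (env : 'I_n -> A) (t : term ar n) : A :=
  match t with
  | Var i => env i
  | App f ts => op f (fun j => eval op env (ts j))
  end.

Definition top3 (A F : Type) (ar : F -> nat) (op : forall f : F, ('I_(ar f) -> A) -> A)
  (t : term ar 3) (x y z : A) : A :=
  eval op (fun i : 'I_3 => nth x [:: x; y; z] i) t.

Definition top6 (A F : Type) (ar : F -> nat) (op : forall f : F, ('I_(ar f) -> A) -> A)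
  (t : term ar 6) (x1 x2 x3 x4 x5 x6 : A) : A :=
  eval op (fun i : 'I_6 => nth x1 [:: x1; x2; x3; x4; x5; x6] i) t.

Definition is_minority_term (A F : Type) (ar : F -> nat)
  (op : forall f : F, ('I_(ar f) -> A) -> A) (m : term ar 3) : Prop :=
  forall x y : A, top3 op m y x x = y /\ top3 op m x y x = y /\ top3 op m x x y = y.

Definition is_maltsev_term (A F : Type) (ar : F -> nat)
  (op : forall f : F, ('I_(ar f) -> A) -> A) (p : term ar 3) : Prop :=
  forall x y : A, top3 op p x x y = y /\ top3 op p y x x = y.

Definition is_minority_majority_term (A F : Type) (ar : F -> nat)
  (op : forall f : F, ('I_(ar f) -> A) -> A) (t : term ar 6) : Prop :=
  forall x y z : A,
    top6 op t y x x z y y = y /\ top6 op t x y x y z y = y /\ top6 op t x x y y y z = y.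

(* Main.v *)
Require Import Defs.
From mathcomp Require Import all_boot.
From Stdlib Require Import FunctionalExtensionality.
Set Implicit Arguments. Unset Strict Implicit.

Section S.
Variables (A F : Type) (ar : F -> nat) (op : forall f : F, ('I_(ar f) -> A) -> A).

Fixpoint subst n k (s : 'I_n -> term ar k) (t : term ar n) : term ar k :=
  match t with Var i => s i | App f ts => @App _ ar k f (fun j => @subst n k s (ts j)) end.

Lemma eval_subst n k (s : 'I_n -> term ar k) env t :
  eval op env (subst s t) = eval op (fun i => eval op env (s i)) t.
Proof.
elim: t => [i|f ts IH] //=. congr (op _). apply: functional_extensionality => j. exact: IH.
Qed.

Definition v0 : term ar 3 := Var _ (@Ordinal 3 0 isT).
Definition v1 : term ar 3 := Var _ (@Ordinal 3 1 isT).
Definition v2 : term ar 3 := Var _ (@Ordinal 3 2 isT).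

Definition sub3 (a b c : term ar 3) : 'I_3 -> term ar 3 := fun i => nth v0 [:: a; b; c] i.
Definition sub6 (a b c d e g : term ar 3) : 'I_6 -> term ar 3 :=
  fun i => nth v0 [:: a; b; c; d; e; g] i.

Lemma top3_sub (p : term ar 3) a b c x y z :
  top3 op (subst (sub3 a b c) p) x y z = top3 op p (top3 op a x y z) (top3 op b x y z) (top3 op c x y z).
Proof.
rewrite /top3 eval_subst; congr (eval _ _ _).
apply: functional_extensionality => -[[|[|[|i]]] Hi] //.
Qed.

Lemma top6_sub (t : term ar 6) a b c d e g x y z :
  top3 op (subst (sub6 a b c d e g) t) x y z =
  top6 op t (top3 op a x y z) (top3 op b x y z) (top3 op c x y z)
            (top3 op d x y z) (top3 op e x y z) (top3 op g x y z).
Proof.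
rewrite /top3 /top6 eval_subst; congr (eval _ _ _).
apply: functional_extensionality => -[[|[|[|[|[|[|i]]]]]] Hi] //.
Qed.

End S.

Theorem theorem3p1 (A F : Type) (ar : F -> nat)
  (op : forall f : F, ('I_(ar f) -> A) -> A) :
  (exists m : term ar 3, is_minority_term op m) <->
  ((exists p : term ar 3, is_maltsev_term op p) /\
   (exists t : term ar 6, is_minority_majority_term op t)).
Proof.
split.
- move=> [m Hm]; split.
  + exists m => x y; have [? [? ?]] := Hm x y; split; assumption.
  + exists (subst (fun i : 'I_3 => Var ar (widen_ord (isT : 3 <= 6) i)) m) => x y z.
    rewrite !/top6 !eval_subst.
    have := Hm x y; rewrite /top3 => -[H1 [H2 H3]].
    split; [|split].
    * rewrite -[RHS]H1; congr (eval _ _ _); apply: functional_extensionality => -[[|[|[|i]]] Hi] //.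
    * rewrite -[RHS]H2; congr (eval _ _ _); apply: functional_extensionality => -[[|[|[|i]]] Hi] //.
    * rewrite -[RHS]H3; congr (eval _ _ _); apply: functional_extensionality => -[[|[|[|i]]] Hi] //.
- move=> [[p Hp] [t Ht]].
  pose a := subst (sub3 (@v1 _ ar) (@v0 _ ar) (@v2 _ ar)) p.
  pose b := subst (sub3 (@v0 _ ar) (@v1 _ ar) (@v2 _ ar)) p.
  pose c := subst (sub3 (@v0 _ ar) (@v2 _ ar) (@v1 _ ar)) p.
  exists (subst (sub6 (@v0 _ ar) (@v1 _ ar) (@v2 _ ar) a b c) t) => x y.
  rewrite !top6_sub /a /b /c !top3_sub.
  have E1 := Hp x y. have E2 := Hp y x.
  rewrite /top3 /=. rewrite /top3 in E1 E2.
  case: E1 => -> ->.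
  split; [exact: (proj1 (Ht _ _ _))|split; [exact: (proj1 (proj2 (Ht _ _ _)))|exact: (proj2 (proj2 (Ht _ _ _)))]].
Qed.
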